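(* Let $\mathbf{a}=(a_n)_{n\geq 1}$ be a strong divisibility sequence. Then for every non-negative integer $n$, \[\mathrm{lcm}\left\{\binom{n}{0}_{\mathbf{a}},\binom{n}{1}_{\mathbf{a}},\dots,\binom{n}{n}_{\mathbf{a}}\right\}=\frac{\mathrm{lcm}(a_1,a_2,\dots,a_n,a_{n+1})}{a_{n+1}}.\]
   Context: A strong divisibility sequence is a sequence of positive integers $(a_n)_{n\geq1}$ such that $\gcd(a_n,a_m)=a_{\gcd(n,m)}$ for all positive integers $n,m$. For integers $0\leq k\leq n$, the $\mathbf{a}$-binomial coefficient is $\binom{n}{k}_{\mathbf{a}}:=\frac{a_na_{n-1}\cdots a_{n-k+1}}{a_1a_2\cdots a_k}$ (empty products equal $1$); for a strong divisibility sequence these are positive integers. $\mathrm{lcm}$ denotes the least common positive multiple. *)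

(* Defs.v *)
From mathcomp Require Import all_boot.
Set Implicit Arguments. Unset Strict Implicit. Unset Printing Implicit Defensive.

(* A sequence (a_n)_{n>=1} of positive integers is modelled as a : nat -> nat;
   the value a 0 is irrelevant and never used. *)
Definition strong_div_seq (a : nat -> nat) : Prop :=
  (forall n, 0 < n -> 0 < a n) /\
  (forall n m, 0 < n -> 0 < m -> gcdn (a n) (a m) = a (gcdn n m)).

(* a-binomial coefficient  (a_n a_{n-1} ... a_{n-k+1}) / (a_1 ... a_k),
   for 0 <= k <= n (empty products equal 1). Division is nat division; for a
   strong divisibility sequence it is exact. *)
Definition abinom (a : nat -> nat) (n k : nat) : nat :=
  (\prod_(0 <= i < k) a (n - i)) %/ (\prod_(1 <= i < k.+1) a i).

(* Main.v *)
Require Import Defs.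
From mathcomp Require Import all_boot zify.

Lemma cnt1 r m : 0 < r -> \sum_(1 <= i < m.+1) (r %| i) = m %/ r.
Proof.
move=> r0; elim: m => [|m IH]; first by rewrite big_geq // div0n.
by rewrite big_nat_recr //= IH divnS // addnC.
Qed.

Lemma cnt2 r n k : 0 < r -> k <= n ->
  \sum_(0 <= i < k) (r %| n - i) = n %/ r - (n - k) %/ r.
Proof.
move=> r0; elim: k => [|k IH] hk; first by rewrite big_geq // subn0 subnn.
rewrite big_nat_recr //= IH ?(ltnW hk) //.
have e : n - k = (n - k.+1).+1 by lia.
have h1 : (n - k) %/ r <= n %/ r by apply: leq_div2r; lia.
move: h1; rewrite e divnS //; lia.
Qed.

Lemma cnt x B : x <= B -> \sum_(0 <= e < B) (e < x) = x.
Proof.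
move=> h; rewrite (@big_cat_nat _ _ _ x) /=; [|by []|exact: h].
rewrite (eq_big_nat _ _ (F2 := fun _ => 1)); last by move=> i /andP[_ ->].
rewrite [X in _ + X](eq_big_nat _ _ (F2 := fun _ => 0)); last first.
  by move=> i /andP[hi _]; rewrite ltnNge hi.
by rewrite !sum_nat_const_nat; lia.
Qed.

Lemma prod_gt0 (s : seq nat) (F : nat -> nat) :
  (forall i, i \in s -> 0 < F i) -> 0 < \prod_(i <- s) F i.
Proof.
move=> h; rewrite big_seq; apply: (big_ind (fun x => 0 < x)) => //; first by move=> u v; rewrite muln_gt0 => ->.
Qed.

Lemma logn_prod p (s : seq nat) (F : nat -> nat) :
  (forall i, i \in s -> 0 < F i) -> logn p (\prod_(i <- s) F i) = \sum_(i <- s) logn p (F i).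
Proof.
elim: s => [|x s IH] h; first by rewrite !big_nil logn1.
have h' : forall i, i \in s -> 0 < F i by move=> i hi; apply: h; rewrite inE hi orbT.
rewrite !big_cons lognM ?h ?mem_head ?IH //; exact: prod_gt0.
Qed.

Lemma lcm_gt0 (s : seq nat) (F : nat -> nat) :
  (forall i, i \in s -> 0 < F i) -> 0 < \big[lcmn/1]_(i <- s) F i.
Proof.
move=> h; rewrite big_seq; apply: (big_ind (fun x => 0 < x)) => //; first by move=> u v; rewrite lcmn_gt0 => ->.
Qed.

Lemma logn_lcmb p (s : seq nat) (F : nat -> nat) :
  (forall i, i \in s -> 0 < F i) ->
  logn p (\big[lcmn/1]_(i <- s) F i) = \max_(i <- s) logn p (F i).
Proof.
elim: s => [|x s IH] h; first by rewrite !big_nil logn1.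
have h' : forall i, i \in s -> 0 < F i by move=> i hi; apply: h; rewrite inE hi orbT.
rewrite !big_cons logn_lcm ?h ?mem_head ?IH //; exact: lcm_gt0.
Qed.

Lemma argmax (s : seq nat) (F : nat -> nat) : s != [::] ->
  exists2 m, m \in s & \max_(i <- s) F i = F m.
Proof.
elim: s => [|x s IH] // _; rewrite big_cons.
case: s IH => [|y s] IH; first by exists x; rewrite ?big_nil ?maxn0 ?mem_head.
have [m hm e] := IH isT.
case: (leqP (F x) (F m)) => h.
  exists m; first by rewrite inE hm orbT.
  by rewrite e; apply/maxn_idPr.
exists x; first by rewrite mem_head.
by rewrite e; apply/maxn_idPl/ltnW.
Qed.

Lemma dvd_from_log d m : 0 < d -> 0 < m -> (forall p, logn p d <= logn p m) -> d %| m.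
Proof.
move=> d0 m0 h; apply/lcmn_idPr; apply: eqn_from_log => //; first by rewrite lcmn_gt0 d0.
by move=> p; rewrite logn_lcm //; apply/maxn_idPr.
Qed.
Lemma no_mult r s : r < s -> s < r.*2 -> ~~ (r %| s).
Proof. move=> h1 h2; apply/negP=> /dvdnP [c hc]; subst s; rewrite -muln2 in h2; case: c h1 h2 => [|[|c]] h1 h2; nia. Qed.
Lemma decomp r x k : (x+k).+1 = (x%/r + k%/r) * r + (x%%r + k%%r).+1.
Proof. rewrite {1}(divn_eq x r) {1}(divn_eq k r); lia. Qed.
Lemma carry_le r x k m n: 0<r -> n = x + k -> (r <= n.+1 -> r %| m) ->
  (r <= x%%r + k%%r) <= (r %| m) - (r %| n.+1).
Proof.
move=> r0 -> hm; case E: (r <= x%%r + k%%r) => //.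
have hr : r <= (x+k).+1 by move: E (leq_mod x r) (leq_mod k r); lia.
rewrite hm //.
have -> : (r %| (x+k).+1) = false.
  apply/negbTE; rewrite (decomp r) (dvdn_addr _ (dvdn_mull _ (dvdnn r))).
  apply: no_mult; move: E (ltn_pmod x r0) (ltn_pmod k r0); lia.
by [].
Qed.
Lemma carry_eq r x k n: 0<r -> n = x + k -> r %| k.+1 ->
  (r <= x%%r + k%%r) = ~~ (r %| n.+1).
Proof.
move=> r0 -> d.
have hk : k %% r = r.-1.
  case/dvdnP: d => c hc.
  have -> : k = c.-1 * r + r.-1 by case: c hc => [|c] hc; nia.
  by rewrite modnMDl modn_small // prednK.
rewrite -addnS (dvdn_addl _ d) hk /dvdn.
case: (x %% r) => [|y]; lia.
Qed.

Lemma arith1 q1 q2 (c : nat) : q2 <= q1 + q2 + c - q1 /\ q1 + q2 + c - q1 - q2 = c.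
Proof. lia. Qed.

Lemma exists_r (f : nat -> nat)
  (hf : forall i j, 0 < i -> 0 < j -> f (gcdn i j) = minn (f i) (f j)) e N :
  exists2 r, 0 < r & forall i, 0 < i -> i <= N -> (e < f i) = (r %| i).
Proof.
case: (boolP [exists i : 'I_N.+1, (0 < i) && (e < f i)]) => [/existsP ex | nex].
- have ex' : exists i, (0 < i) && (e < f i) by case: ex => i hi; exists i.
  case: (ex_minnP ex') => r /andP[r0 hr] hmin.
  exists r => // i i0 iN; apply/idP/idP => [hi|hd].
  + have g0 : 0 < gcdn i r by rewrite gcdn_gt0 i0.
    have hg : e < f (gcdn i r) by rewrite hf // leq_min hi hr.
    have hle := hmin _ (introT andP (conj g0 hg)).
    have : gcdn i r = r by apply/eqP; rewrite eqn_leq hle dvdn_leq // dvdn_gcdr.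
    by move <-; rewrite dvdn_gcdl.
  + have hg : gcdn r i = r by apply/gcdn_idPl.
    move: (hf r i r0 i0); rewrite hg => h2.
    by move: hr; rewrite h2 leq_min => /andP[].
- exists N.+1 => // i i0 iN.
  have -> : (N.+1 %| i) = false by apply/negbTE; apply/negP => /(dvdn_leq i0); lia.
  apply/negbTE; apply: contra nex => h; apply/existsP.
  by exists (Ordinal (n:=N.+1) (m:=i) iN); rewrite /= i0 h.
Qed.

Section PerE.
Variable f : nat -> nat.
Hypothesis hf : forall i j, 0 < i -> 0 < j -> f (gcdn i j) = minn (f i) (f j).
Variables n m : nat.
Hypothesis m0 : 0 < m.
Hypothesis mn : m <= n.+1.
Hypothesis hmax : forall i : nat, 0 < i -> i <= n.+1 -> f i <= f m.

Definition AA e k := \sum_(0 <= i < k) (e < f (n - i)).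
Definition DD e k := \sum_(1 <= i < k.+1) (e < f i).

Lemma per_e e k : k <= n ->
  [/\ DD e k <= AA e k, AA e k - DD e k <= (e < f m) - (e < f n.+1)
    & (k = m.-1 -> AA e k - DD e k = (e < f m) - (e < f n.+1))].
Proof.
move=> kn; have [r r0 hr] := @exists_r f hf e n.+1.
have hA : AA e k = n %/ r - (n - k) %/ r.
  rewrite -cnt2 //; apply: eq_big_nat => i /andP[_ ik]; rewrite hr //; lia.
have hD : DD e k = k %/ r.
  rewrite -cnt1 //; apply: eq_big_nat => i /andP[i1 ik]; rewrite hr //; lia.
rewrite hA hD (hr m) // (hr n.+1) //.
set x := n - k.
have -> : n %/ r = x %/ r + k %/ r + (r <= x %% r + k %% r).
  by rewrite -divnD // /x subnK.
have hrm : r <= n.+1 -> r %| m.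
  move=> rn; rewrite -hr //. have := hmax r r0 rn. have := hr r r0 rn. rewrite dvdnn. move=> H1 H2; exact: leq_trans H1 H2.
have nx : n = x + k by rewrite /x subnK.
have cl := @carry_le r x k m n r0 nx hrm.
have ce : k = m.-1 -> ((r <= x %% r + k %% r) : nat) = (r %| m) - (r %| n.+1).
  move=> km.
  case: (boolP (r %| m)) => hd.
  + have := @carry_eq r x k n r0 nx; rewrite km prednK // => /(_ hd) ->.
    by case: (r %| n.+1).
  + have rb : n.+1 < r by rewrite ltnNge; exact: contra hrm hd.
    have -> : (r <= x %% r + k %% r) = false.
      by apply/negbTE; rewrite -ltnNge; apply: leq_ltn_trans (leq_add (leq_mod x r) (leq_mod k r)) _; rewrite -nx; exact: ltnW.
    have -> : (r %| n.+1) = false.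
      by apply/negbTE/negP => /(dvdn_leq (ltn0Sn n)); rewrite leqNgt rb.
    by [].
move: cl ce; move: (r <= x %% r + k %% r) (x %/ r) (k %/ r) => c q1 q2 cl ce.
have [H1 H2] := arith1 q1 q2 c.
rewrite H2; split => //.
Qed.
End PerE.
Section Main.
Variable a : nat -> nat.
Hypothesis apos : forall i, 0 < i -> 0 < a i.
Hypothesis agcd : forall i j, 0 < i -> 0 < j -> gcdn (a i) (a j) = a (gcdn i j).
Variable n : nat.

Definition num k := \prod_(0 <= i < k) a (n - i).
Definition den k := \prod_(1 <= i < k.+1) a i.
Definition LL := \big[lcmn/1]_(1 <= i < n.+2) a i.

Lemma hfp p : forall i j, 0 < i -> 0 < j ->
  logn p (a (gcdn i j)) = minn (logn p (a i)) (logn p (a j)).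
Proof. by move=> i j i0 j0; rewrite -agcd // logn_gcd ?apos. Qed.

Lemma argm p : exists m, [/\ 0 < m, m <= n.+1,
  (forall i : nat, 0 < i -> i <= n.+1 -> logn p (a i) <= logn p (a m))
  & logn p LL = logn p (a m)].
Proof.
have [m hm e] := @argmax (index_iota 1 n.+2) (fun i => logn p (a i)) isT.
move: hm; rewrite mem_index_iota => /andP[m1 m2].
exists m; split.
- exact: m1.
- exact: m2.
- move=> i i0 iN; rewrite -e; apply: (@leq_bigmax_seq _ _ xpredT (fun i => logn p (a i))) => //.
  rewrite mem_index_iota; lia.
- rewrite /LL logn_lcmb // => i; rewrite mem_index_iota => /andP[i1 _]; exact: apos.
Qed.

Lemma sum_split p m k :
  (forall i : nat, 0 < i -> i <= n.+1 -> logn p (a i) <= logn p (a m)) -> k <= n ->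
  logn p (num k) = \sum_(0 <= e < logn p (a m)) AA (fun i => logn p (a i)) n e k /\
  logn p (den k) = \sum_(0 <= e < logn p (a m)) DD (fun i => logn p (a i)) e k.
Proof.
move=> hmax kn; split.
- rewrite /num logn_prod; last by move=> i; rewrite mem_index_iota => /andP[_ ik]; apply: apos; lia.
  rewrite /AA [RHS]exchange_big /=; apply: eq_big_nat => i /andP[_ ik].
  by rewrite cnt //; apply: hmax; lia.
- rewrite /den logn_prod; last by move=> i; rewrite mem_index_iota => /andP[i1 _]; apply: apos.
  rewrite /DD [RHS]exchange_big /=; apply: eq_big_nat => i /andP[i1 ik].
  by rewrite cnt //; apply: hmax; lia.
Qed.

Lemma num_gt0 k : k <= n -> 0 < num k.
Proof. by move=> kn; apply: prod_gt0 => i; rewrite mem_index_iota => /andP[_ ik]; apply: apos; lia. Qed.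
Lemma den_gt0 k : 0 < den k.
Proof. by apply: prod_gt0 => i; rewrite mem_index_iota => /andP[i1 _]; apply: apos. Qed.

Lemma dv k : k <= n -> den k %| num k.
Proof.
move=> kn; apply: dvd_from_log; [exact: den_gt0 | exact: num_gt0 |] => p.
have [m [m0 mn hmax _]] := argm p.
have [-> ->] := @sum_split p m k hmax kn.
by apply: leq_sum => e _; case: (@per_e _ (hfp p) n m m0 mn hmax e k kn).
Qed.

End Main.

Theorem theorem1 (a : nat -> nat) (Ha : strong_div_seq a) (n : nat) :
  \big[lcmn/1]_(0 <= k < n.+1) abinom a n k
  = (\big[lcmn/1]_(1 <= i < n.+2) a i) %/ a n.+1.
Proof.
case: Ha => apos agcd.
have ab0 : forall k, k <= n -> 0 < abinom a n k.
  move=> k kn; rewrite /abinom divn_gt0 ?den_gt0 //.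
  exact: dvdn_leq (@num_gt0 a apos n k kn) (@dv a apos agcd n k kn).
have L0 : 0 < LL a n by apply: lcm_gt0 => i; rewrite mem_index_iota => /andP[i1 _]; apply: apos.
have aL : a n.+1 %| LL a n by rewrite /LL big_nat_recr //= dvdn_lcmr.
apply: eqn_from_log.
- by apply: lcm_gt0 => k; rewrite mem_index_iota => /andP[_ kn]; apply: ab0.
- by rewrite divn_gt0 ?apos // dvdn_leq.
move=> p /=.
have [m [m0 mn hmax hL]] := @argm a apos n p.
rewrite -/(LL a n) logn_div // hL.
rewrite logn_lcmb; last by move=> k; rewrite mem_index_iota => /andP[_ kn]; apply: ab0.
have val : forall k, k <= n -> logn p (abinom a n k) =
    \sum_(0 <= e < logn p (a m)) (AA (fun i => logn p (a i)) n e k - DD (fun i => logn p (a i)) e k).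
  move=> k kn; rewrite /abinom -/(num a n k) -/(den a k) logn_div ?(@dv a apos agcd n k kn) //.
  have [-> ->] := @sum_split a apos n p m k hmax kn.
  rewrite sumnB // => e _; by case: (@per_e _ (@hfp a apos agcd p) n m m0 mn hmax e k kn).
have rhs : logn p (a m) - logn p (a n.+1) =
    \sum_(0 <= e < logn p (a m)) ((e < logn p (a m)) - (e < logn p (a n.+1))).
  have hh := hmax n.+1 isT (leqnn _).
  rewrite sumnB ?cnt //; move=> e _; lia.
apply/eqP; rewrite eqn_leq; apply/andP; split.
- apply/bigmax_leqP_seq => k; rewrite mem_index_iota => /andP[_ kn] _.
  rewrite val // rhs; apply: leq_sum => e _.
  by case: (@per_e _ (@hfp a apos agcd p) n m m0 mn hmax e k kn).
- have hk : m.-1 <= n by lia.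
  apply: (leq_trans _ (@leq_bigmax_seq _ _ xpredT (fun k => logn p (abinom a n k)) m.-1 _ _)) => //;
    last by rewrite mem_index_iota; lia.
  rewrite val // rhs; apply/eq_leq/eq_bigr => e _.
  by case: (@per_e _ (@hfp a apos agcd p) n m m0 mn hmax e m.-1 hk) => _ _ ->.
Qed.
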